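(* Let $k\ge2$ and $r\ge0$ be integers and $\alpha>k+r$ real. Then $$\sum_{n=1}^\infty\frac{H_{n+\alpha}}{\binom{n+k+r}{k}}=k\sum_{j=1}^{k-1}(-1)^{j+1}\binom{k-1}{j}\Bigg\{H_{\alpha-r-1}^2+H_{\alpha-r-1}^{(2)}-H_{\alpha-r-1-j}^2-H_{\alpha-r-1-j}^{(2)}-(r+1+j-\alpha)\sum_{i=1}^{r+1+j}\frac{H_{\alpha+i-r-1-j}}{i(\alpha+i-r-1-j)}+(r+1-\alpha)\sum_{i=1}^{r+1}\frac{H_{\alpha+i-r-1}}{i(\alpha+i-r-1)}\Bigg\},$$ $$\sum_{n=1}^\infty\frac{H_{n+\alpha}^{(2)}}{\binom{n+k+r}{k}}=k\sum_{j=1}^{k-1}(-1)^{j+1}\binom{k-1}{j}\Bigg\{(r+1-\alpha)\sum_{i=1}^{r+1}\frac{H^{(2)}_{\alpha+i-r-1}}{i(\alpha+i-r-1)}-(r+1+j-\alpha)\sum_{i=1}^{r+1+j}\frac{H^{(2)}_{\alpha+i-r-1-j}}{i(\alpha+i-r-1-j)}-\sum_{i=1}^{j}\frac{H_{\alpha+i-r-1-j}}{(\alpha+i-r-1-j)^2}$$ $$+2H^{(3)}_{\alpha-r-1}+H_{\alpha-r-1-j}\zeta(2)+2H_{\alpha-r-1}H^{(2)}_{\alpha-r-1}-2H^{(3)}_{\alpha-r-1-j}-H_{\alpha-r-1}\zeta(2)-2H_{\alpha-r-1-j}H^{(2)}_{\alpha-r-1-j}\Bigg\},$$ $$\sum_{n=1}^\infty\frac{H_{n+\alpha}^2}{\binom{n+k+r}{k}}=k\sum_{j=1}^{k-1}(-1)^{j+1}\binom{k-1}{j}\Bigg\{H^3_{\alpha-r-1}+H_{\alpha-r-1}H^{(2)}_{\alpha-r-1}+H_{\alpha-r-1}\zeta(2)-H^3_{\alpha-r-1-j}-H_{\alpha-r-1-j}H^{(2)}_{\alpha-r-1-j}-H_{\alpha-r-1-j}\zeta(2)$$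 $$+(r+1-\alpha)\sum_{i=1}^{r+1}\frac{H^2_{\alpha+i-r-1}}{i(\alpha+i-r-1)}+\sum_{i=1}^{j}\frac{H_{\alpha+i-r-1-j}}{(\alpha+i-r-1-j)^2}-(r+1+j-\alpha)\sum_{i=1}^{r+1+j}\frac{H^2_{\alpha+i-r-1-j}}{i(\alpha+i-r-1-j)}\Bigg\}.$$
   Context: Shifted harmonic numbers: for a real $\alpha$ that is not a negative integer, $H_\alpha := \sum_{k=1}^\infty\left(\frac1k-\frac1{k+\alpha}\right)$ and, for integers $m\ge 2$, $H_\alpha^{(m)} := \sum_{k=1}^\infty\left(\frac1{k^m}-\frac1{(k+\alpha)^m}\right)=\zeta(m)-\zeta(m,\alpha+1)$, where $\zeta$ is the Riemann zeta function and $\zeta(s,\alpha+1)=\sum_{n=1}^\infty (n+\alpha)^{-s}$ is the Hurwitz zeta function. Powers such as $H_\alpha^2$ mean $(H_\alpha)^2$. Empty sums are $0$. *)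

(* Defs.v *)
From Stdlib Require Import Reals ClassicalEpsilon.
Open Scope R_scope.

(* The value of a convergent series sum_{n>=0} f n (chosen by epsilon;
   unique by uniqueness of limits; irrelevant junk value if divergent). *)
Definition series_val (f : nat -> R) : R :=
  epsilon (inhabits 0) (fun l => infinite_sum f l).

Definition Hsh (a : R) : R :=
  series_val (fun k => / (INR k + 1) - / (INR k + 1 + a)).

Definition Hshm (m : nat) (a : R) : R :=
  series_val (fun k => / (INR k + 1) ^ m - / (INR k + 1 + a) ^ m).

Definition zeta (m : nat) : R := series_val (fun k => / (INR k + 1) ^ m).

Fixpoint sum1 (n : nat) (f : nat -> R) : R :=
  match n with
  | O => 0
  | S m => sum1 m f + f (S m)
  end.

(* Main.v *)
Require Import Defs.
From Stdlib Require Import Reals Lra Lia Psatz ClassicalEpsilon ZArith Arith.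
From Coquelicot Require Import Coquelicot.
Import Stdlib.Reals.Binomial.
Open Scope R_scope.

Lemma series_val_correct (f : nat -> R) (l : R) : is_series f l -> series_val f = l.
Proof.
  intro H. unfold series_val.
  assert (E: exists l, infinite_sum f l) by (exists l; apply is_series_Reals; auto).
  pose proof (epsilon_spec (inhabits 0) (fun l => infinite_sum f l) E) as H2.
  apply is_series_Reals in H2.
  apply is_series_unique in H. apply is_series_unique in H2. congruence.
Qed.

Lemma is_series_lim (a : nat -> R) (l : R) : is_lim_seq (sum_n a) l -> is_series a l.
Proof. intros H; exact H. Qed.
Lemma is_series_lim' (a : nat -> R) (l : R) : is_series a l -> is_lim_seq (sum_n a) l.
Proof. intros H; exact H. Qed.

Lemma isR_plus (a b : nat -> R) (la lb : R) : is_series a la -> is_series b lb ->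
  is_series (fun n => a n + b n) (la + lb).
Proof. intros; exact (is_series_plus a b la lb H H0). Qed.
Lemma isR_minus (a b : nat -> R) (la lb : R) : is_series a la -> is_series b lb ->
  is_series (fun n => a n - b n) (la - lb).
Proof. intros; exact (is_series_minus a b la lb H H0). Qed.
Lemma isR_scal (c : R) (a : nat -> R) (l : R) : is_series a l -> is_series (fun n => c * a n) (c * l).
Proof. intros; exact (is_series_scal c a l H). Qed.
Lemma isR_ext (a b : nat -> R) (la lb : R) : (forall n, a n = b n) -> la = lb -> is_series a la -> is_series b lb.
Proof. intros H1 H2 H3; subst; exact (is_series_ext a b lb H1 H3). Qed.

Lemma sum_n_tele (a : nat -> R) N : sum_n (fun k => a k - a (S k)) N = a 0%nat - a (S N).
Proof.
  induction N. rewrite sum_O. reflexivity.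
  rewrite sum_Sn, IHN. unfold plus; simpl. ring.
Qed.

Lemma is_series_tele (a : nat -> R) (l : R) : is_lim_seq a l -> is_series (fun k => a k - a (S k)) (a 0%nat - l).
Proof.
  intro H. apply is_series_lim.
  apply is_lim_seq_ext with (fun N => a 0%nat - a (S N)).
  intro N; rewrite sum_n_tele; auto.
  apply (is_lim_seq_minus _ _ (a 0%nat) l). apply is_lim_seq_const.
  apply (is_lim_seq_incr_1 a l). exact H.
  reflexivity.
Qed.

Lemma lim_inv_n : is_lim_seq (fun n => / (INR n + 1)) 0.
Proof.
  replace (Finite 0) with (Rbar_inv p_infty) by reflexivity.
  apply is_lim_seq_inv.
  apply (is_lim_seq_plus _ _ p_infty 1). apply is_lim_seq_INR. apply is_lim_seq_const.
  reflexivity. discriminate.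
Qed.

Lemma ex_series_cmp (a b : nat -> R) : (forall n, 0 <= a n <= b n) -> ex_series b -> ex_series a.
Proof.
  intros H Hb. apply (ex_series_le a b); auto.
  intro n. change (norm (a n)) with (Rabs (a n)). rewrite Rabs_pos_eq; apply H.
Qed.

Lemma INR_S1 k : INR (S k) = INR k + 1.
Proof. apply S_INR. Qed.

Lemma lim_sq0 (a : nat -> R) : (forall n, 0 <= a n <= / (INR n + 1)) -> is_lim_seq a 0.
Proof.
  intro H. apply is_lim_seq_le_le with (fun _ => 0) (fun n => / (INR n + 1)).
  auto. apply is_lim_seq_const. apply lim_inv_n.
Qed.

Lemma pos_INR1 k : 0 < INR k + 1.
Proof. pose proof (pos_INR k); lra. Qed.

Lemma ex_inv_sq : ex_series (fun k => / (INR k + 1) ^ 2).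
Proof.
  apply ex_series_cmp with (fun k => 2 * (/ (INR k + 1) - / (INR (S k) + 1))).
  - intro n. rewrite S_INR. pose proof (pos_INR n).
    split. apply Rlt_le, Rinv_0_lt_compat. nra.
    replace (2 * (/ (INR n + 1) - / (INR n + 1 + 1))) with (/ ((INR n + 1) * (INR n + 1 + 1) / 2)) by (field; lra).
    apply Rinv_le_contravar. nra. nra.
  - exists (2 * (/ (INR 0 + 1) - 0)). apply isR_scal.
    apply (is_series_tele (fun k => / (INR k + 1)) 0). apply lim_inv_n.
Qed.

Lemma z_ser m : (2 <= m)%nat -> is_series (fun k => / (INR k + 1)^m) (zeta m).
Proof.
  intro Hm. unfold zeta.
  assert (E : ex_series (fun k => / (INR k + 1)^m)).
  { apply ex_series_cmp with (fun k => / (INR k + 1)^2); [|apply ex_inv_sq].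
    intro n. pose proof (pos_INR n). split.
    apply Rlt_le, Rinv_0_lt_compat, pow_lt; lra.
    apply Rinv_le_contravar. apply pow_lt; lra. apply Rle_pow; [lra|exact Hm]. }
  destruct E as [l Hl]. rewrite (series_val_correct _ l Hl). exact Hl.
Qed.

Lemma H_ser x : 0 <= x -> is_series (fun k => / (INR k + 1) - / (INR k + 1 + x)) (Hsh x).
Proof.
  intro Hx. unfold Hsh.
  assert (E : ex_series (fun k => / (INR k + 1) - / (INR k + 1 + x))).
  { apply ex_series_cmp with (fun k => x * / (INR k + 1)^2).
    intro n. pose proof (pos_INR n). split.
    assert (/ (INR n + 1 + x) <= / (INR n + 1)) by (apply Rinv_le_contravar; lra). lra.
    replace (/ (INR n + 1) - / (INR n + 1 + x)) with (x * / ((INR n + 1) * (INR n + 1 + x))) by (field; lra).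
    apply Rmult_le_compat_l; auto. apply Rinv_le_contravar. nra. nra.
    destruct ex_inv_sq as [l Hl]. exists (x * l). apply isR_scal; auto. }
  destruct E as [l Hl]. rewrite (series_val_correct _ l Hl). exact Hl.
Qed.

Lemma Hm_ser m x : (2 <= m)%nat -> 0 <= x ->
  is_series (fun k => / (INR k + 1) ^ m - / (INR k + 1 + x) ^ m) (Hshm m x).
Proof.
  intros Hm Hx. unfold Hshm.
  assert (E : ex_series (fun k => / (INR k + 1) ^ m - / (INR k + 1 + x) ^ m)).
  { apply ex_series_cmp with (fun k => / (INR k + 1)^m).
    intro n. pose proof (pos_INR n).
    assert (0 < (INR n + 1) ^ m) by (apply pow_lt; lra).
    assert (0 < (INR n + 1 + x) ^ m) by (apply pow_lt; lra).
    assert (/ (INR n + 1 + x) ^ m <= / (INR n + 1) ^ m).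
    { apply Rinv_le_contravar; auto. apply pow_incr; lra. }
    assert (0 < / (INR n + 1 + x) ^ m) by (apply Rinv_0_lt_compat; auto).
    lra.
    exists (zeta m). apply z_ser; auto. }
  destruct E as [l Hl]. rewrite (series_val_correct _ l Hl). exact Hl.
Qed.

Lemma is_series_uniq2 (a : nat -> R) (l1 l2 : R) : is_series a l1 -> is_series a l2 -> l1 = l2.
Proof. intros H1 H2. apply is_series_unique in H1. apply is_series_unique in H2. congruence. Qed.

Lemma lim_inv_shift c : 0 <= c -> is_lim_seq (fun k => / (INR k + 1 + c)) 0.
Proof.
  intro Hc. apply lim_sq0. intro n; pose proof (pos_INR n); split.
  apply Rlt_le, Rinv_0_lt_compat; lra. apply Rinv_le_contravar; lra.
Qed.

Lemma H_rec x : 0 <= x -> Hsh (x + 1) = Hsh x + / (x + 1).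
Proof.
  intro Hx.
  assert (Hd := isR_minus _ _ _ _ (H_ser (x+1) ltac:(lra)) (H_ser x Hx)).
  assert (Ht := is_series_tele (fun k => / (INR k + 1 + x)) 0 (lim_inv_shift x Hx)).
  assert (Ht2 : is_series (fun n => / (INR n + 1) - / (INR n + 1 + (x + 1)) -
                 (/ (INR n + 1) - / (INR n + 1 + x))) (/ (x + 1))).
  { revert Ht. apply isR_ext. intro n. rewrite S_INR.
    replace (INR n + 1 + (x + 1)) with (INR n + 1 + 1 + x) by ring. ring.
    simpl. replace (0 + 1 + x) with (x + 1) by ring. ring. }
  pose proof (is_series_uniq2 _ _ _ Hd Ht2). lra.
Qed.

Lemma Hm_rec m x : (2 <= m)%nat -> 0 <= x -> Hshm m (x + 1) = Hshm m x + / (x + 1) ^ m.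
Proof.
  intros Hm Hx.
  assert (Hd := isR_minus _ _ _ _ (Hm_ser m (x+1) Hm ltac:(lra)) (Hm_ser m x Hm Hx)).
  assert (Hl : is_lim_seq (fun k => / (INR k + 1 + x) ^ m) 0).
  { apply lim_sq0. intro n; pose proof (pos_INR n). split.
    apply Rlt_le, Rinv_0_lt_compat, pow_lt; lra.
    apply Rinv_le_contravar. lra. rewrite <- (pow_1 (INR n + 1)) at 1.
    apply Rle_trans with ((INR n + 1 + x) ^ 1). simpl; lra.
    apply Rle_pow; [lra|lia]. }
  assert (Ht := is_series_tele (fun k => / (INR k + 1 + x) ^ m) 0 Hl).
  assert (Ht2 : is_series (fun n => / (INR n + 1) ^ m - / (INR n + 1 + (x + 1)) ^ m -
                 (/ (INR n + 1) ^ m - / (INR n + 1 + x) ^ m)) (/ (x + 1) ^ m)).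
  { revert Ht. apply isR_ext. intro n. rewrite S_INR.
    replace (INR n + 1 + (x + 1)) with (INR n + 1 + 1 + x) by ring. ring.
    simpl. replace (0 + 1 + x) with (x + 1) by ring. ring. }
  pose proof (is_series_uniq2 _ _ _ Hd Ht2). lra.
Qed.

Lemma kron_id (c : nat -> R) N : sum_n c N = (INR N + 2) * sum_n (fun n => c n / INR (S n)) N
   - sum_n (sum_n (fun m => c m / INR (S m))) N.
Proof.
  induction N.
  - rewrite !sum_O. simpl. field.
  - rewrite !sum_Sn. unfold plus; cbn -[INR sum_n]. rewrite IHN.
    rewrite !S_INR; field; pose proof (pos_INR N); lra.
Qed.

Lemma lim_ratio : is_lim_seq (fun N => (INR N + 2) / (INR N + 1)) 1.
Proof.
  apply is_lim_seq_ext with (fun N => 1 + / (INR N + 1)).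
  intro n. field. pose proof (pos_INR n); lra.
  replace (Finite 1) with (Finite (1 + 0)) by (f_equal; ring).
  apply is_lim_seq_plus'. apply is_lim_seq_const. apply lim_inv_n.
Qed.

Lemma kron (c : nat -> R) (L : R) : is_series (fun n => c n / INR (S n)) L ->
  is_lim_seq (fun N => sum_n c N / INR (S N)) 0.
Proof.
  intro H. set (s := sum_n (fun n => c n / INR (S n))).
  assert (Hs : is_lim_seq s L) by exact H.
  assert (Hc : is_lim_seq (fun N => sum_n s N / INR (S N)) L).
  { pose proof (Cesaro_1 s L (proj1 (is_lim_seq_Reals s L) Hs)) as Hc.
    apply is_lim_seq_Reals in Hc.
    apply (is_lim_seq_incr_1 _ L) in Hc.
    revert Hc. apply is_lim_seq_ext. intro n. simpl pred. rewrite sum_n_Reals. reflexivity. }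
  apply is_lim_seq_ext with (fun N => s N * ((INR N + 2) / (INR N + 1)) - sum_n s N / INR (S N)).
  { intro N. rewrite (kron_id c N). fold s. rewrite S_INR. field. pose proof (pos_INR N); lra. }
  replace (Finite 0) with (Finite (L * 1 - L)) by (f_equal; ring).
  apply is_lim_seq_minus'; auto. apply is_lim_seq_mult'; auto. apply lim_ratio.
Qed.

Lemma abel_id (u : nat -> R) N :
  sum_n (fun n => u (S n) / (INR (S n) * (INR (S n) + 1))) N =
  u 0%nat + sum_n (fun n => (u (S n) - u n) / INR (S n)) N - u (S N) / (INR (S N) + 1).
Proof.
  induction N.
  - rewrite !sum_O. simpl. field.
  - rewrite !sum_Sn. unfold plus; cbn -[INR sum_n]. rewrite IHN. rewrite !S_INR. field.
    pose proof (pos_INR N). lra.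
Qed.

Lemma sum_n_tele2 (u : nat -> R) N : sum_n (fun n => u (S n) - u n) N = u (S N) - u 0%nat.
Proof.
  induction N. rewrite sum_O. reflexivity.
  rewrite sum_Sn, IHN. unfold plus; simpl. ring.
Qed.

Lemma lim_ratio2 : is_lim_seq (fun N => INR (S N) / (INR (S N) + 1)) 1.
Proof.
  apply is_lim_seq_ext with (fun N => 1 - / (INR (S N) + 1)).
  intro n. field. pose proof (pos_INR (S n)); lra.
  replace (Finite 1) with (Finite (1 - 0)) by (f_equal; ring).
  apply is_lim_seq_minus'. apply is_lim_seq_const.
  apply (is_lim_seq_incr_1 (fun n => / (INR n + 1)) 0). apply lim_inv_n.
Qed.

Lemma abel_bnd (u : nat -> R) (L : R) : is_series (fun n => (u (S n) - u n) / INR (S n)) L ->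
  is_lim_seq (fun N => u (S N) / (INR (S N) + 1)) 0.
Proof.
  intro H. pose proof (kron _ _ H) as K.
  apply is_lim_seq_ext with (fun N => u 0%nat * / (INR (S N) + 1) +
      sum_n (fun n => u (S n) - u n) N / INR (S N) * (INR (S N) / (INR (S N) + 1)) ).
  { intro N. rewrite sum_n_tele2. field. split. pose proof (pos_INR (S N)); lra.
    rewrite S_INR. pose proof (pos_INR N); lra. }
  replace (Finite 0) with (Finite (u 0%nat * 0 + 0 * 1)) by (f_equal; ring).
  apply is_lim_seq_plus'. apply is_lim_seq_mult'. apply is_lim_seq_const.
  apply (is_lim_seq_incr_1 (fun n => / (INR n + 1)) 0). apply lim_inv_n.
  apply is_lim_seq_mult'. auto. apply lim_ratio2.
Qed.

Lemma abel (u : nat -> R) (L : R) : is_series (fun n => (u (S n) - u n) / INR (S n)) L ->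
  is_series (fun n => u (S n) / (INR (S n) * (INR (S n) + 1))) (u 0%nat + L).
Proof.
  intro H. apply is_series_lim.
  apply is_lim_seq_ext with (fun N => u 0%nat + sum_n (fun n => (u (S n) - u n) / INR (S n)) N
     - u (S N) / (INR (S N) + 1)).
  { intro N. symmetry. apply abel_id. }
  replace (Finite (u 0%nat + L)) with (Finite (u 0%nat + L - 0)) by (f_equal; ring).
  apply is_lim_seq_minus'. apply is_lim_seq_plus'. apply is_lim_seq_const. exact H.
  exact (abel_bnd u L H).
Qed.

Lemma S1_ser y : 0 < y -> is_series (fun n => / (INR (S n) * (INR (S n) + y))) (Hsh y / y).
Proof.
  intro Hy. pose proof (isR_scal (/ y) _ _ (H_ser y ltac:(lra))) as H.
  revert H. apply isR_ext.
  intro n. rewrite S_INR. pose proof (pos_INR n). field. lra.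
  field. lra.
Qed.

Lemma zmH2_ser y : 0 <= y -> is_series (fun n => / (INR n + 1 + y) ^ 2) (zeta 2 - Hshm 2 y).
Proof.
  intro Hy. pose proof (isR_minus _ _ _ _ (z_ser 2 ltac:(lia)) (Hm_ser 2 y ltac:(lia) Hy)) as H.
  revert H. apply isR_ext. intro n. ring. reflexivity.
Qed.

Lemma S2_ser y : 0 < y -> is_series (fun n => / (INR (S n) * (INR (S n) + y) ^ 2))
   (Hsh y / y ^ 2 - (zeta 2 - Hshm 2 y) / y).
Proof.
  intro Hy.
  pose proof (isR_minus _ _ _ _ (isR_scal (/ y ^ 2) _ _ (H_ser y ltac:(lra)))
      (isR_scal (/ y) _ _ (zmH2_ser y ltac:(lra)))) as H.
  revert H. apply isR_ext.
  intro n. rewrite S_INR. pose proof (pos_INR n). field. lra.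
  field. lra.
Qed.

Lemma is_series_zero : is_series (fun _ => 0) 0.
Proof.
  apply is_series_lim. apply is_lim_seq_ext with (fun _ => 0).
  intro n. symmetry. rewrite sum_n_const. ring. apply is_lim_seq_const.
Qed.

Lemma H_nonneg x : 0 <= x -> 0 <= Hsh x.
Proof.
  intro Hx. pose proof (H_ser x Hx) as H. apply is_series_unique in H. rewrite <- H.
  replace 0 with (Series (fun _ => 0)).
  apply Series_le. intro n. pose proof (pos_INR n). split. lra.
  assert (/ (INR n + 1 + x) <= / (INR n + 1)) by (apply Rinv_le_contravar; lra). lra.
  eexists. apply H_ser; auto.
  apply is_series_unique, is_series_zero.
Qed.

Lemma baseH y : 0 < y -> is_series (fun n => Hsh (INR (S n) + y) / (INR (S n) * (INR (S n) + 1)))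
   (Hsh y + Hsh y / y).
Proof.
  intro Hy. pose proof (abel (fun n => Hsh (INR n + y)) (Hsh y / y)) as H.
  cbv beta in H. change (INR 0) with 0 in H. rewrite Rplus_0_l in H. apply H. clear H.
  pose proof (S1_ser y Hy) as H. revert H. apply isR_ext; auto.
  intro n. rewrite (S_INR n). pose proof (pos_INR n).
  replace (INR n + 1 + y) with (INR n + y + 1) by ring.
  rewrite H_rec by lra. field. lra.
Qed.

Lemma baseH2 y : 0 < y -> is_series (fun n => Hshm 2 (INR (S n) + y) / (INR (S n) * (INR (S n) + 1)))
   (Hshm 2 y + (Hsh y / y ^ 2 - (zeta 2 - Hshm 2 y) / y)).
Proof.
  intro Hy. pose proof (abel (fun n => Hshm 2 (INR n + y)) (Hsh y / y ^ 2 - (zeta 2 - Hshm 2 y) / y)) as H.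
  cbv beta in H. change (INR 0) with 0 in H. rewrite Rplus_0_l in H. apply H. clear H.
  pose proof (S2_ser y Hy) as H. revert H. apply isR_ext; auto.
  intro n. rewrite (S_INR n). pose proof (pos_INR n).
  replace (INR n + 1 + y) with (INR n + y + 1) by ring.
  rewrite Hm_rec by lia || lra. field. lra.
Qed.

Lemma S1_ex y : 0 <= y -> ex_series (fun n => / (INR (S n) * (INR (S n) + y))).
Proof.
  intro Hy. apply ex_series_cmp with (fun k => / (INR k + 1) ^ 2); [|apply ex_inv_sq].
  intro n. rewrite S_INR. pose proof (pos_INR n). split.
  apply Rlt_le, Rinv_0_lt_compat. nra. apply Rinv_le_contravar. nra. nra.
Qed.

Lemma Hbnd x : 0 <= x -> is_lim_seq (fun N => Hsh (INR (S N) + x) / (INR (S N) + 1)) 0.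
Proof.
  intro Hx. destruct (S1_ex x Hx) as [L HL].
  apply (abel_bnd (fun n => Hsh (INR n + x)) L).
  revert HL. apply isR_ext; auto.
  intro n. rewrite (S_INR n). pose proof (pos_INR n).
  replace (INR n + 1 + x) with (INR n + x + 1) by ring.
  rewrite H_rec by lra. field. lra.
Qed.

Lemma baseH_ex y : 0 <= y -> ex_series (fun n => Hsh (INR (S n) + y) / (INR (S n) * (INR (S n) + 1))).
Proof.
  intro Hy. destruct (S1_ex y Hy) as [L HL].
  exists (Hsh (INR 0 + y) + L).
  apply (abel (fun n => Hsh (INR n + y)) L).
  revert HL. apply isR_ext; auto.
  intro n. rewrite (S_INR n). pose proof (pos_INR n).
  replace (INR n + 1 + y) with (INR n + y + 1) by ring.
  rewrite H_rec by lra. field. lra.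
Qed.

Definition wterm x q := Hsh (INR q + 1 + x) * (/ (INR q + 1) - / (INR q + 1 + x)).
Definition W x := Series (wterm x).

Lemma W_ex x : 0 <= x -> ex_series (wterm x).
Proof.
  intro Hx. destruct (baseH_ex x Hx) as [L HL].
  apply ex_series_cmp with (fun n => (1 + x) * (Hsh (INR (S n) + x) / (INR (S n) * (INR (S n) + 1)))).
  - intro n. unfold wterm. rewrite S_INR. pose proof (pos_INR n).
    pose proof (H_nonneg (INR n + 1 + x) ltac:(lra)).
    replace (/ (INR n + 1) - / (INR n + 1 + x)) with (x / ((INR n + 1) * (INR n + 1 + x))) by (field; lra).
    split. apply Rmult_le_pos; auto. apply Rmult_le_pos; auto. apply Rlt_le, Rinv_0_lt_compat; nra.
    replace ((1 + x) * (Hsh (INR n + 1 + x) / ((INR n + 1) * (INR n + 1 + 1)))) with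
      (Hsh (INR n + 1 + x) * ((1 + x) / ((INR n + 1) * (INR n + 1 + 1)))) by (field; lra).
    apply Rmult_le_compat_l; auto.
    unfold Rdiv. apply Rmult_le_reg_r with ((INR n + 1) * (INR n + 1 + 1) * (INR n + 1 + x)). nra.
    replace (x * / ((INR n + 1) * (INR n + 1 + x)) * ((INR n + 1) * (INR n + 1 + 1) * (INR n + 1 + x)))
      with (x * (INR n + 1 + 1)) by (field; lra).
    replace ((1 + x) * / ((INR n + 1) * (INR n + 1 + 1)) * ((INR n + 1) * (INR n + 1 + 1) * (INR n + 1 + x)))
      with ((1 + x) * (INR n + 1 + x)) by (field; lra).
    nra.
  - exists ((1 + x) * L). apply isR_scal. auto.
Qed.

Lemma W_ser x : 0 <= x -> is_series (wterm x) (W x).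
Proof. intro Hx. apply Series_correct, W_ex, Hx. Qed.

Lemma W0 : W 0 = 0.
Proof.
  unfold W. apply is_series_unique. apply isR_ext with (fun _ => 0) 0; auto.
  intro n. unfold wterm. rewrite Rplus_0_r. ring. apply is_series_zero.
Qed.

Lemma W_rec x : 0 <= x -> W (x + 1) = W x + 2 * (Hsh (x + 1) / (x + 1)).
Proof.
  intro Hx.
  assert (Hd := isR_minus _ _ _ _ (W_ser (x+1) ltac:(lra)) (W_ser x Hx)).
  assert (Hl : is_lim_seq (fun q => Hsh (INR q + 1 + x) / (INR q + 1 + x)) 0).
  { apply is_lim_seq_le_le with (fun _ => 0) (fun N => 2 * (Hsh (INR (S N) + x) / (INR (S N) + 1))).
    - intro n. rewrite S_INR. pose proof (pos_INR n).
      pose proof (H_nonneg (INR n + 1 + x) ltac:(lra)). split.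
      apply Rmult_le_pos; auto. apply Rlt_le, Rinv_0_lt_compat; lra.
      unfold Rdiv. rewrite <- Rmult_assoc, (Rmult_comm 2), Rmult_assoc.
      apply Rmult_le_compat_l; auto.
      replace (2 * / (INR n + 1 + 1)) with (/ ((INR n + 1 + 1) / 2)) by (field; lra).
      apply Rinv_le_contravar; lra.
    - apply is_lim_seq_const.
    - replace (Finite 0) with (Finite (2 * 0)) by (f_equal; ring).
      apply is_lim_seq_mult'. apply is_lim_seq_const. apply Hbnd; auto. }
  assert (Ht := is_series_tele _ 0 Hl).
  assert (Hs := S1_ser (x + 1) ltac:(lra)).
  assert (H2 := isR_plus _ _ _ _ Hs Ht).
  assert (E : forall n, / (INR (S n) * (INR (S n) + (x + 1))) +
     (Hsh (INR n + 1 + x) / (INR n + 1 + x) - Hsh (INR (S n) + 1 + x) / (INR (S n) + 1 + x))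
     = wterm (x + 1) n - wterm x n).
  { intro n. unfold wterm. rewrite S_INR. pose proof (pos_INR n).
    replace (INR n + 1 + 1 + x) with (INR n + 1 + x + 1) by ring.
    replace (INR n + 1 + (x + 1)) with (INR n + 1 + x + 1) by ring.
    rewrite H_rec by lra. field. lra. }
  pose proof (isR_ext _ _ _ _ E eq_refl H2) as H3.
  pose proof (is_series_uniq2 _ _ _ Hd H3). change (INR 0) with 0 in H.
  cbv beta in H. rewrite Rplus_0_l in H. replace (1 + x) with (x + 1) in H by ring. lra.
Qed.

Lemma H_mono x x' : 0 <= x -> x <= x' -> Hsh x <= Hsh x'.
Proof.
  intros Hx Hxx. rewrite <- (is_series_unique _ _ (H_ser x Hx)).
  rewrite <- (is_series_unique _ _ (H_ser x' ltac:(lra))).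
  apply Series_le. intro n. pose proof (pos_INR n).
  assert (/ (INR n + 1 + x) <= / (INR n + 1)) by (apply Rinv_le_contravar; lra).
  assert (/ (INR n + 1 + x') <= / (INR n + 1 + x)) by (apply Rinv_le_contravar; lra). lra.
  eexists. apply H_ser; lra.
Qed.

Lemma H2_mono x x' : 0 <= x -> x <= x' -> Hshm 2 x <= Hshm 2 x'.
Proof.
  intros Hx Hxx. rewrite <- (is_series_unique _ _ (Hm_ser 2 x ltac:(lia) Hx)).
  rewrite <- (is_series_unique _ _ (Hm_ser 2 x' ltac:(lia) ltac:(lra))).
  apply Series_le. intro n. pose proof (pos_INR n).
  assert (/ (INR n + 1 + x)^2 <= / (INR n + 1)^2) by (apply Rinv_le_contravar; nra).
  assert (/ (INR n + 1 + x')^2 <= / (INR n + 1 + x)^2) by (apply Rinv_le_contravar; nra). lra.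
  eexists. apply Hm_ser; lia || lra.
Qed.

Lemma W_mono x x' : 0 <= x -> x <= x' -> W x <= W x'.
Proof.
  intros Hx Hxx. unfold W. apply Series_le; [|apply W_ex; lra].
  intro n. unfold wterm. pose proof (pos_INR n).
  pose proof (H_nonneg (INR n + 1 + x) ltac:(lra)).
  pose proof (H_mono (INR n + 1 + x) (INR n + 1 + x') ltac:(lra) ltac:(lra)).
  assert (/ (INR n + 1 + x) <= / (INR n + 1)) by (apply Rinv_le_contravar; lra).
  assert (/ (INR n + 1 + x') <= / (INR n + 1 + x)) by (apply Rinv_le_contravar; lra).
  split. apply Rmult_le_pos; lra.
  apply Rmult_le_compat; lra.
Qed.

Lemma H0 : Hsh 0 = 0.
Proof.
  pose proof (is_series_unique _ _ (H_ser 0 ltac:(lra))) as H. rewrite <- H.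
  apply is_series_unique. apply isR_ext with (fun _ => 0) 0; auto.
  intro n. rewrite Rplus_0_r. ring. apply is_series_zero.
Qed.

Lemma H20 : Hshm 2 0 = 0.
Proof.
  pose proof (is_series_unique _ _ (Hm_ser 2 0 ltac:(lia) ltac:(lra))) as H. rewrite <- H.
  apply is_series_unique. apply isR_ext with (fun _ => 0) 0; auto.
  intro n. rewrite Rplus_0_r. ring. apply is_series_zero.
Qed.

Definition g x := W x - Hsh x ^ 2 - Hshm 2 x.

Lemma g_rec x : 0 <= x -> g (x + 1) = g x.
Proof.
  intro Hx. unfold g. rewrite W_rec, H_rec, Hm_rec; try lia; try lra.
  field. lra.
Qed.

Lemma g_nat n : g (INR n) = 0.
Proof.
  induction n. simpl. unfold g. rewrite W0, H0, H20. ring.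
  rewrite S_INR, g_rec; auto. apply pos_INR.
Qed.

Lemma g_shift y n : 0 <= y -> g (y + INR n) = g y.
Proof.
  intro Hy. induction n. simpl. rewrite Rplus_0_r; auto.
  rewrite S_INR. replace (y + (INR n + 1)) with ((y + INR n) + 1) by ring.
  rewrite g_rec; auto. pose proof (pos_INR n); lra.
Qed.

Lemma g_bound y n : 0 <= y <= 1 ->
  Rabs (g y) <= 8 * (Hsh (INR (S n) + 0) / (INR (S n) + 1)) + / (INR n + 1).
Proof.
  intro Hy. rewrite <- (g_shift y n) by lra.
  replace (g (y + INR n)) with (g (y + INR n) - g (INR n)) by (rewrite g_nat; ring).
  pose proof (pos_INR n) as Hn.
  unfold g.
  pose proof (W_mono (INR n) (y + INR n) ltac:(lra) ltac:(lra)) as W1.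
  pose proof (W_mono (y + INR n) (INR n + 1) ltac:(lra) ltac:(lra)) as W2.
  rewrite W_rec in W2 by lra.
  pose proof (H_mono (INR n) (y + INR n) ltac:(lra) ltac:(lra)) as M1.
  pose proof (H_mono (y + INR n) (INR n + 1) ltac:(lra) ltac:(lra)) as M2.
  rewrite H_rec in M2 by lra.
  pose proof (H2_mono (INR n) (y + INR n) ltac:(lra) ltac:(lra)) as N1.
  pose proof (H2_mono (y + INR n) (INR n + 1) ltac:(lra) ltac:(lra)) as N2.
  rewrite Hm_rec in N2 by (lia || lra).
  pose proof (H_nonneg (INR n) ltac:(lra)) as P0.
  rewrite S_INR, Rplus_0_r.
  set (h := Hsh (INR n + 1)). assert (Hh : h = Hsh (INR n) + / (INR n + 1)) by (apply H_rec; lra).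
  assert (Hi : 0 < / (INR n + 1)) by (apply Rinv_0_lt_compat; lra).
  assert (Hi2 : / (INR n + 1) ^ 2 <= / (INR n + 1)).
  { apply Rinv_le_contravar; nra. }
  assert (Hi3 : 2 * (h / (INR n + 1)) <= 4 * (h / (INR n + 1 + 1))).
  { unfold Rdiv. rewrite (Rmult_comm h), (Rmult_comm h), <- !Rmult_assoc.
    apply Rmult_le_compat_r. lra.
    replace (2 * / (INR n + 1)) with (/ ((INR n + 1) / 2)) by (field; lra).
    replace (4 * / (INR n + 1 + 1)) with (/ ((INR n + 1 + 1) / 4)) by (field; lra).
    apply Rinv_le_contravar; lra. }
  assert (Hsq : 0 <= Hsh (y + INR n) ^ 2 - Hsh (INR n) ^ 2 <= 2 * (h / (INR n + 1))).
  { split. nra.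
    replace (Hsh (y + INR n) ^ 2 - Hsh (INR n) ^ 2) with
      ((Hsh (y + INR n) - Hsh (INR n)) * (Hsh (y + INR n) + Hsh (INR n))) by ring.
    replace (2 * (h / (INR n + 1))) with (/ (INR n + 1) * (2 * h)) by (field; lra).
    apply Rmult_le_compat; nra. }
  apply Rabs_le. fold h in W2. split; nra.
Qed.

Lemma g_zero01 y : 0 <= y <= 1 -> g y = 0.
Proof.
  intro Hy.
  assert (Hl : is_lim_seq (fun n => 8 * (Hsh (INR (S n) + 0) / (INR (S n) + 1)) + / (INR n + 1)) 0).
  { replace (Finite 0) with (Finite (8 * 0 + 0)) by (f_equal; ring).
    apply is_lim_seq_plus'. apply is_lim_seq_mult'. apply is_lim_seq_const.
    apply Hbnd; lra. apply lim_inv_n. }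
  assert (Rabs (g y) <= 0).
  { pose proof (is_lim_seq_le (fun _ => Rabs (g y))
      (fun n => 8 * (Hsh (INR (S n) + 0) / (INR (S n) + 1)) + / (INR n + 1)) (Rabs (g y)) 0
      (fun n => g_bound y n Hy) (is_lim_seq_const _) Hl) as HH. simpl in HH. exact HH. }
  pose proof (Rabs_pos (g y)). apply Rabs_eq_0. lra.
Qed.

Lemma g_zero y : 0 <= y -> g y = 0.
Proof.
  intro Hy. destruct (archimed y) as [Hu _].
  assert (Hm : exists m : nat, y <= INR m + 1).
  { exists (Z.to_nat (up y)). destruct (Z.lt_ge_cases (up y) 0).
    - assert (Hz : IZR 0 < IZR (up y)) by (simpl; lra). apply lt_IZR in Hz. lia.
    - rewrite INR_IZR_INZ, Z2Nat.id; auto. lra. }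
  destruct Hm as [m Hm]. clear Hu. revert y Hy Hm. induction m; intros y Hy Hm.
  - apply g_zero01. simpl in Hm. lra.
  - destruct (Rle_dec y 1). apply g_zero01; lra.
    replace y with ((y - 1) + 1) by ring. rewrite g_rec by lra.
    apply IHm. lra. rewrite S_INR in Hm. lra.
Qed.

Lemma S3_ser y : 0 < y -> is_series (fun n => Hsh (INR (S n) + y) / (INR (S n) * (INR (S n) + y)))
   ((Hsh y ^ 2 + Hshm 2 y) / y).
Proof.
  intro Hy. pose proof (isR_scal (/ y) _ _ (W_ser y ltac:(lra))) as H.
  assert (HW : W y = Hsh y ^ 2 + Hshm 2 y) by (pose proof (g_zero y ltac:(lra)) as Hg; unfold g in Hg; lra).
  revert H. apply isR_ext.
  intro n. unfold wterm. rewrite S_INR. pose proof (pos_INR n). field. lra.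
  rewrite HW. field. lra.
Qed.

Lemma baseHH y : 0 < y -> is_series (fun n => Hsh (INR (S n) + y) ^ 2 / (INR (S n) * (INR (S n) + 1)))
   (Hsh y ^ 2 + (2 * ((Hsh y ^ 2 + Hshm 2 y) / y) - (Hsh y / y ^ 2 - (zeta 2 - Hshm 2 y) / y))).
Proof.
  intro Hy. pose proof (abel (fun n => Hsh (INR n + y) ^ 2)
     (2 * ((Hsh y ^ 2 + Hshm 2 y) / y) - (Hsh y / y ^ 2 - (zeta 2 - Hshm 2 y) / y))) as H.
  cbv beta in H. change (INR 0) with 0 in H. rewrite Rplus_0_l in H. apply H. clear H.
  pose proof (isR_minus _ _ _ _ (isR_scal 2 _ _ (S3_ser y Hy)) (S2_ser y Hy)) as H.
  revert H. apply isR_ext; auto.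
  intro n. pose proof (pos_INR n).
  assert (E : Hsh (INR n + y) = Hsh (INR (S n) + y) - / (INR (S n) + y)).
  { rewrite S_INR. replace (INR n + 1 + y) with (INR n + y + 1) by ring.
    rewrite H_rec by lra. field. lra. }
  rewrite E. rewrite S_INR. field. lra.
Qed.

Fixpoint sumlt (n : nat) (f : nat -> R) : R :=
  match n with O => 0 | S m => sumlt m f + f m end.
Fixpoint prodlt (n : nat) (f : nat -> R) : R :=
  match n with O => 1 | S m => prodlt m f * f m end.

Lemma sumlt_ext n f g : (forall i, (i < n)%nat -> f i = g i) -> sumlt n f = sumlt n g.
Proof. induction n; simpl; intros; auto. rewrite IHn, H; auto. Qed.
Lemma sum1_ext n f g : (forall i, (1 <= i <= n)%nat -> f i = g i) -> sum1 n f = sum1 n g.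
Proof. induction n; simpl; intros; auto. rewrite IHn. rewrite H. reflexivity. lia. intros; apply H; lia. Qed.
Lemma sumlt_S n f : sumlt (S n) f = f 0%nat + sumlt n (fun i => f (S i)).
Proof. induction n. simpl. ring. change (sumlt (S (S n)) f) with (sumlt (S n) f + f (S n)). rewrite IHn. simpl. ring. Qed.
Lemma sumlt_sum1 n f : sumlt (S n) f = f 0%nat + sum1 n f.
Proof. induction n. simpl. ring. change (sumlt (S (S n)) f) with (sumlt (S n) f + f (S n)). rewrite IHn. simpl. ring. Qed.
Lemma sumlt_plus n f g : sumlt n (fun i => f i + g i) = sumlt n f + sumlt n g.
Proof. induction n; simpl; [ring|rewrite IHn; ring]. Qed.
Lemma sumlt_minus n f g : sumlt n (fun i => f i - g i) = sumlt n f - sumlt n g.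
Proof. induction n; simpl; [ring|rewrite IHn; ring]. Qed.
Lemma sumlt_scal n c f : sumlt n (fun i => c * f i) = c * sumlt n f.
Proof. induction n; simpl; [ring|rewrite IHn; ring]. Qed.
Lemma sum1_scal n c f : sum1 n (fun i => c * f i) = c * sum1 n f.
Proof. induction n; simpl; [ring|rewrite IHn; ring]. Qed.
Lemma sum1_minus n f g : sum1 n (fun i => f i - g i) = sum1 n f - sum1 n g.
Proof. induction n; simpl; [ring|rewrite IHn; ring]. Qed.

Lemma C_nn n : C n n = 1.
Proof. unfold C. rewrite Nat.sub_diag. simpl. field. apply not_0_INR, fact_neq_0. Qed.
Lemma C_n0 n : C n 0 = 1.
Proof. unfold C. rewrite Nat.sub_0_r. simpl. field. apply not_0_INR, fact_neq_0. Qed.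

Definition cK K j := if Nat.leb j K then C K j else 0.

Lemma cK_pascal K j : (j <= K)%nat -> C (S K) (S j) = cK K j + cK K (S j).
Proof.
  intro Hj. unfold cK. destruct (Nat.eq_dec j K).
  - subst. rewrite Nat.leb_refl. replace (Nat.leb (S K) K) with false.
    rewrite !C_nn. ring. symmetry. apply Nat.leb_gt. lia.
  - replace (Nat.leb j K) with true by (symmetry; apply Nat.leb_le; lia).
    replace (Nat.leb (S j) K) with true by (symmetry; apply Nat.leb_le; lia).
    symmetry. apply pascal. lia.
Qed.

Lemma bin_diff K (h : nat -> R) :
  sumlt (S (S K)) (fun j => (-1) ^ j * C (S K) j * h j) =
  sumlt (S K) (fun j => (-1) ^ j * C K j * (h j - h (S j))).
Proof.
  rewrite sumlt_S. rewrite C_n0.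
  rewrite (sumlt_ext (S K) _ (fun j => (-1) ^ S j * cK K j * h (S j) + (-1) ^ S j * cK K (S j) * h (S j))).
  2: { intros i Hi. rewrite cK_pascal by lia. ring. }
  rewrite sumlt_plus.
  assert (E1 : sumlt (S K) (fun j => (-1) ^ S j * cK K j * h (S j)) =
               sumlt (S K) (fun j => (-1) ^ S j * C K j * h (S j))).
  { apply sumlt_ext. intros i Hi. unfold cK. replace (Nat.leb i K) with true; auto.
    symmetry; apply Nat.leb_le; lia. }
  assert (E2 : (-1) ^ 0 * 1 * h 0%nat + sumlt (S K) (fun j => (-1) ^ S j * cK K (S j) * h (S j)) =
               sumlt (S K) (fun j => (-1) ^ j * C K j * h j)).
  { transitivity (sumlt (S (S K)) (fun j => (-1) ^ j * cK K j * h j)).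
    { rewrite (sumlt_S (S K) (fun j => (-1) ^ j * cK K j * h j)). replace (cK K 0) with 1. reflexivity.
      unfold cK. simpl. rewrite C_n0. reflexivity. }
    change (sumlt (S (S K)) (fun j => (-1) ^ j * cK K j * h j)) with
      (sumlt (S K) (fun j => (-1) ^ j * cK K j * h j) + (-1) ^ (S K) * cK K (S K) * h (S K)).
    replace (cK K (S K)) with 0.
    rewrite Rmult_0_r, Rmult_0_l, Rplus_0_r.
    apply sumlt_ext. intros i Hi. unfold cK. replace (Nat.leb i K) with true; auto.
    symmetry; apply Nat.leb_le; lia.
    unfold cK. replace (Nat.leb (S K) K) with false; auto. symmetry; apply Nat.leb_gt; lia. }
  rewrite E1.
  replace ((-1) ^ 0 * 1 * h 0%nat +
    (sumlt (S K) (fun j : nat => (-1) ^ S j * C K j * h (S j)) +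
     sumlt (S K) (fun i : nat => (-1) ^ S i * cK K (S i) * h (S i)))) with
   (((-1) ^ 0 * 1 * h 0%nat + sumlt (S K) (fun i : nat => (-1) ^ S i * cK K (S i) * h (S i)))
    + sumlt (S K) (fun j : nat => (-1) ^ S j * C K j * h (S j))) by ring.
  rewrite E2. rewrite <- sumlt_plus. apply sumlt_ext. intros. simpl. ring.
Qed.

Lemma prodlt_S n f : prodlt (S n) f = f 0%nat * prodlt n (fun i => f (S i)).
Proof. induction n. simpl. ring. change (prodlt (S (S n)) f) with (prodlt (S n) f * f (S n)). rewrite IHn. simpl. ring. Qed.
Lemma prodlt_pos n f : (forall i, 0 < f i) -> 0 < prodlt n f.
Proof. intro H. induction n; simpl. lra. apply Rmult_lt_0_compat; auto. Qed.
Lemma sumlt_ext' n f g : (forall i, f i = g i) -> sumlt n f = sumlt n g.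
Proof. intros; apply sumlt_ext; auto. Qed.

Lemma prodlt_ext n f g : (forall i, f i = g i) -> prodlt n f = prodlt n g.
Proof. intro H; induction n; simpl; auto. rewrite IHn, H; auto. Qed.

Lemma pf K : forall v, 0 < v ->
  sumlt (S K) (fun j => (-1) ^ j * C K j * / (v + INR j)) =
  INR (fact K) / prodlt (S K) (fun i => v + INR i).
Proof.
  induction K; intros v Hv.
  - simpl. rewrite C_nn. field. lra.
  - rewrite (bin_diff K (fun j => / (v + INR j))).
    rewrite (sumlt_ext' _ _ (fun j => (-1) ^ j * C K j * / (v + INR j) - (-1) ^ j * C K j * / ((v + 1) + INR j))).
    2: { intro i. rewrite S_INR. replace (v + (INR i + 1)) with (v + 1 + INR i) by ring. ring. }
    rewrite sumlt_minus, IHK, IHK by lra.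
    assert (HP : 0 < prodlt (S K) (fun i => v + INR i)).
    { apply prodlt_pos. intro i; pose proof (pos_INR i); lra. }
    assert (HQ : 0 < prodlt (S K) (fun i => v + 1 + INR i)).
    { apply prodlt_pos. intro i; pose proof (pos_INR i); lra. }
    assert (E1 : prodlt (S (S K)) (fun i => v + INR i) = v * prodlt (S K) (fun i => v + 1 + INR i)).
    { rewrite prodlt_S. replace (v + INR 0) with v by (simpl; ring). f_equal.
      apply prodlt_ext. intro i. rewrite S_INR. ring. }
    assert (E2 : prodlt (S (S K)) (fun i => v + INR i) = prodlt (S K) (fun i => v + INR i) * (v + INR (S K)))
      by reflexivity.
    assert (HK : 0 < v + INR (S K)) by (pose proof (pos_INR (S K)); lra).
    assert (EP : prodlt (S K) (fun i => v + INR i) = v * prodlt (S K) (fun i => v + 1 + INR i) / (v + INR (S K))).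
    { rewrite <- E1, E2. field. lra. }
    rewrite E1, EP. change (fact (S K)) with ((S K) * fact K)%nat. rewrite mult_INR, S_INR.
    rewrite S_INR in *. field. repeat split; lra.
Qed.

Lemma fact_prod t k : INR (fact (t + k)) = INR (fact t) * prodlt k (fun i => INR t + 1 + INR i).
Proof.
  induction k.
  - rewrite Nat.add_0_r. simpl. ring.
  - replace (t + S k)%nat with (S (t + k)) by lia.
    change (fact (S (t + k))) with (S (t + k) * fact (t + k))%nat.
    rewrite mult_INR, IHk. simpl prodlt. rewrite S_INR, plus_INR. ring.
Qed.

Lemma coef_sum0 K : sumlt (S (S K)) (fun j => (-1) ^ j * C (S K) j) = 0.
Proof.
  pose proof (bin_diff K (fun _ => 1)) as H.
  rewrite (sumlt_ext' _ _ (fun j => (-1) ^ j * C (S K) j * 1)).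
  rewrite H. rewrite (sumlt_ext' _ _ (fun j => 0 * 0)). clear H.
  induction (S K); simpl; auto. rewrite IHn. ring.
  intro; ring. intro; ring.
Qed.

Lemma invC t K : (1 <= K)%nat ->
  / C (t + S K) (S K) = INR (S K) * sum1 K (fun j => (-1) ^ (j + 1) * C K j *
      (/ (INR t + 1) - / (INR t + 1 + INR j))).
Proof.
  intro HK. set (u := INR t + 1). assert (Hu : 0 < u) by (unfold u; pose proof (pos_INR t); lra).
  unfold C at 1. replace (t + S K - S K)%nat with t by lia.
  rewrite (Nat.add_comm t (S K)) at 1. rewrite Nat.add_comm. rewrite fact_prod. fold u.
  assert (HP : 0 < prodlt (S K) (fun i => u + INR i)).
  { apply prodlt_pos. intro i; pose proof (pos_INR i); lra. }
  assert (Hf : 0 < INR (fact t)) by (apply lt_0_INR; pose proof (fact_neq_0 t); lia).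
  assert (Hf2 : 0 < INR (fact (S K))) by (apply lt_0_INR; pose proof (fact_neq_0 (S K)); lia).
  replace (/ (INR (fact t) * prodlt (S K) (fun i => u + INR i) / (INR (fact (S K)) * INR (fact t))))
    with (INR (S K) * (INR (fact K) / prodlt (S K) (fun i => u + INR i))).
  2: { change (fact (S K)) with ((S K) * fact K)%nat. rewrite mult_INR. field.
       repeat split; try lra. change (fact (S K)) with ((S K) * fact K)%nat in Hf2.
       rewrite mult_INR in Hf2. intro Hc; rewrite Hc in Hf2; lra.
       pose proof (pos_INR (S K)). rewrite S_INR; pose proof (pos_INR K); lra. }
  f_equal. rewrite <- pf by lra.
  destruct K. lia.
  pose proof (coef_sum0 K) as Z.
  rewrite (sumlt_ext' _ _ (fun j => (-1) ^ j * C (S K) j * (/ (u + INR j) - / u) + / u * ((-1) ^ j * C (S K) j))).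
  2: { intro; field. split. lra. pose proof (pos_INR i); lra. }
  rewrite sumlt_plus, sumlt_scal, Z, Rmult_0_r, Rplus_0_r.
  rewrite sumlt_sum1. simpl INR. rewrite Rplus_0_r, Rminus_eq_0, Rmult_0_r, Rplus_0_l.
  apply sum1_ext. intros i Hi. rewrite pow_add. ring.
Qed.

Lemma inv_tele u j : 0 < u -> / u - / (u + INR j) = sumlt j (fun i => / ((u + INR i) * (u + INR i + 1))).
Proof.
  intro Hu. induction j.
  - simpl. rewrite Rplus_0_r. ring.
  - simpl sumlt. rewrite <- IHj. rewrite S_INR. pose proof (pos_INR j). field. lra.
Qed.

Definition cV (F base : R -> R) y M := base y - sum1 M (fun q => F (INR q + y) / (INR q * (INR q + 1))).
Definition Gen (F P : R -> R) x M := P x - x * sum1 M (fun i => F (x + INR i) / (INR i * (x + INR i))).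

Lemma step_gen F P base cf x : 0 <= x ->
  P (x + 1) - (P x - x * (F (x + 1) / (1 * (x + 1)))) + cf (x + 1) = base (x + 1) ->
  forall M, Gen F P (x + 1) M - Gen F P x (S M) + cf (x + 1) = cV F base (x + 1) M.
Proof.
  intros Hx Hb M. induction M.
  - unfold Gen, cV. cbn [sum1]. change (INR 1) with 1. rewrite <- Hb. ring.
  - unfold Gen, cV in *. cbn [sum1] in *.
    assert (E : forall a b c d e : R, a - b + e = d -> a - (x + 1) * (0 + c) + e = d + 0 -> True) by auto.
    pose proof (pos_INR M) as HM.
    rewrite !S_INR in *.
    replace (x + 1 + (INR M + 1)) with (x + INR M + 2) by ring.
    replace (x + (INR M + 1 + 1)) with (x + INR M + 2) by ring.
    replace (INR M + 1 + (x + 1)) with (x + INR M + 2) by ring.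
    set (s1 := sum1 M (fun i => F (x + 1 + INR i) / (INR i * (x + 1 + INR i)))) in *.
    set (s2 := sum1 M (fun i => F (x + INR i) / (INR i * (x + INR i)))) in *.
    set (s3 := sum1 M (fun q => F (INR q + (x + 1)) / (INR q * (INR q + 1)))) in *.
    set (fM := F (x + INR M + 2)).
    assert (KEY : -(x+1) * (fM / ((INR M + 1) * (x + INR M + 2))) + x * (fM / ((INR M + 1 + 1) * (x + INR M + 2)))
       + fM / ((INR M + 1) * (INR M + 1 + 1)) = 0) by (field; lra).
    revert IHM KEY. generalize (fM / ((INR M + 1) * (x + INR M + 2))) (fM / ((INR M + 1 + 1) * (x + INR M + 2)))
      (fM / ((INR M + 1) * (INR M + 1 + 1))) (F (x + (INR M + 1)) / ((INR M + 1) * (x + (INR M + 1)))).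
    intros a b c d IH K. nra.
Qed.


Lemma tele_j F P base cf A r :
  (forall x, 0 <= x -> P (x + 1) - (P x - x * (F (x + 1) / (1 * (x + 1)))) + cf (x + 1) = base (x + 1)) ->
  forall j, INR j <= A ->
  sumlt j (fun i => cV F base (A - INR i) (r + 1 + i)) =
  Gen F P A (r + 1) - Gen F P (A - INR j) (r + 1 + j) + sumlt j (fun i => cf (A - INR i)).
Proof.
  intros Hb j. induction j; intro Hj.
  - simpl. rewrite Rminus_0_r, Nat.add_0_r. ring.
  - rewrite S_INR in Hj. pose proof (pos_INR j).
    cbn [sumlt]. rewrite IHj by lra.
    assert (Hx : 0 <= A - INR (S j)) by (rewrite S_INR; lra).
    pose proof (step_gen F P base cf (A - INR (S j)) Hx (Hb _ Hx) (r + 1 + j)) as HS.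
    replace (A - INR (S j) + 1) with (A - INR j) in HS by (rewrite S_INR; ring).
    replace (S (r + 1 + j)) with (r + 1 + S j)%nat in HS by lia.
    rewrite <- HS. ring.
Qed.

Lemma ser_sum1 N (f : nat -> nat -> R) (l : nat -> R) :
  (forall j, (1 <= j <= N)%nat -> is_series (f j) (l j)) ->
  is_series (fun n => sum1 N (fun j => f j n)) (sum1 N l).
Proof.
  induction N; intro H; simpl.
  - apply is_series_zero.
  - apply isR_plus. apply IHN. intros; apply H; lia. apply H; lia.
Qed.

Lemma ser_sumlt N (f : nat -> nat -> R) (l : nat -> R) :
  (forall j, (j < N)%nat -> is_series (f j) (l j)) ->
  is_series (fun n => sumlt N (fun j => f j n)) (sumlt N l).
Proof.
  induction N; intro H; simpl.
  - apply is_series_zero.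
  - apply isR_plus. apply IHN. intros; apply H; lia. apply H; lia.
Qed.

Lemma ser_shift (g : nat -> R) (L : R) : is_series (fun n => g (S n)) L ->
  forall M, is_series (fun n => g (n + M + 1)%nat) (L - sum1 M g).
Proof.
  intros H M. induction M.
  - revert H. apply isR_ext. intro n. f_equal. lia. simpl. ring.
  - assert (H2 : is_series (fun n => g (n + M + 1)%nat) (plus (L - sum1 (S M) g) (g (0 + M + 1)%nat))).
    { revert IHM. apply isR_ext. auto. change (L - sum1 M g = L - (sum1 M g + g (S M)) + g (0 + M + 1)%nat).
      replace (0 + M + 1)%nat with (S M) by lia. ring. }
    pose proof (is_series_incr_1 _ _ H2) as H3. revert H3. apply isR_ext; auto.
    intro n. f_equal. lia.
Qed.

Lemma main_gen (F base : R -> R) (k r : nat) (alpha : R) :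
  (2 <= k)%nat -> alpha > INR (k + r) ->
  (forall y, 0 < y -> is_series (fun n => F (INR (S n) + y) / (INR (S n) * (INR (S n) + 1))) (base y)) ->
  infinite_sum (fun n => F (INR (n + 1) + alpha) / C (n + 1 + k + r) k)
   (INR k * sum1 (k - 1) (fun j => (-1) ^ (j + 1) * C (k - 1) j *
       sumlt j (fun i => cV F base (alpha - INR r - 1 - INR i) (r + 1 + i)))).
Proof.
  intros Hk Ha Hbase.
  destruct k as [|[|K]]; try lia.
  replace (S (S K) - 1)%nat with (S K) by lia.
  apply is_series_Reals.
  set (A := alpha - INR r - 1).
  assert (HA : INR (S K) < A). { unfold A. rewrite plus_INR in Ha. rewrite !S_INR in *. lra. }
  set (T := fun i n => F (INR (n + 1) + alpha) * / ((INR (n + r + 1) + 1 + INR i) * (INR (n + r + 1) + 1 + INR i + 1))).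
  apply isR_ext with (fun n => INR (S (S K)) * sum1 (S K) (fun j => (-1)^(j+1) * C (S K) j * sumlt j (fun i => T i n)))
     (INR (S (S K)) * sum1 (S K) (fun j => (-1)^(j+1) * C (S K) j * sumlt j (fun i => cV F base (A - INR i) (r+1+i)))).
  - intro n. unfold Rdiv. replace (n + 1 + S (S K) + r)%nat with ((n + r + 1) + S (S K))%nat by lia.
    rewrite invC by lia. rewrite (Rmult_comm (F _)), Rmult_assoc. f_equal.
    rewrite (Rmult_comm _ (F _)). rewrite <- sum1_scal. apply sum1_ext. intros j Hj.
    rewrite inv_tele by (pose proof (pos_INR (n+r+1)); lra).
    unfold T. rewrite sumlt_scal. ring.
  - reflexivity.
  - apply isR_scal.
    apply (ser_sum1 (S K) (fun j n => (-1)^(j+1) * C (S K) j * sumlt j (fun i => T i n))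
       (fun j => (-1)^(j+1) * C (S K) j * sumlt j (fun i => cV F base (A - INR i) (r+1+i)))).
    intros j Hj. apply isR_scal.
    apply (ser_sumlt j (fun i n => T i n) (fun i => cV F base (A - INR i) (r+1+i))).
    intros i Hi.
    assert (Hy : 0 < A - INR i). { assert (INR i < INR (S K)) by (apply lt_INR; lia). lra. }
    pose proof (ser_shift (fun q => F (INR q + (A - INR i)) / (INR q * (INR q + 1))) (base (A - INR i)) (Hbase _ Hy) (r + 1 + i)) as HS.
    revert HS. apply isR_ext; [|reflexivity].
    intro n. unfold T.
    replace (INR (n + (r + 1 + i) + 1) + (A - INR i)) with (INR (n + 1) + alpha) by (unfold A; rewrite !plus_INR; simpl; ring).
    replace (INR (n + (r + 1 + i) + 1)) with (INR (n + r + 1) + 1 + INR i) by (rewrite !plus_INR; simpl; ring).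
    unfold Rdiv. reflexivity.
Qed.

Lemma reidx (f : R -> R) j : forall A,
  sum1 j (fun i => f (A + INR i - INR j)) = sumlt j (fun t => f (A - INR t)).
Proof.
  induction j; intro A. reflexivity.
  cbn [sum1]. rewrite sumlt_S.
  rewrite (sum1_ext j _ (fun i => f ((A - 1) + INR i - INR j))).
  2: { intros i Hi. f_equal. rewrite S_INR. ring. }
  rewrite IHj. replace (A + INR (S j) - INR (S j)) with (A - INR 0) by (simpl; ring).
  rewrite Rplus_comm. f_equal. apply sumlt_ext'. intro t. f_equal. rewrite S_INR. ring.
Qed.

Lemma sumlt_zero n : sumlt n (fun _ => 0) = 0.
Proof. induction n; simpl; auto. rewrite IHn; ring. Qed.
Lemma sumlt_opp n f : sumlt n (fun i => - f i) = - sumlt n f.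
Proof. induction n; simpl. ring. rewrite IHn; ring. Qed.

Definition bH y := Hsh y + Hsh y / y.
Definition bH2 y := Hshm 2 y + (Hsh y / y ^ 2 - (zeta 2 - Hshm 2 y) / y).
Definition bHH y := Hsh y ^ 2 + (2 * ((Hsh y ^ 2 + Hshm 2 y) / y) - (Hsh y / y ^ 2 - (zeta 2 - Hshm 2 y) / y)).
Definition P1 x := Hsh x ^ 2 + Hshm 2 x.
Definition P2 x := 2 * Hshm 3 x + 2 * Hsh x * Hshm 2 x - Hsh x * zeta 2.
Definition P3 x := Hsh x ^ 3 + Hsh x * Hshm 2 x + Hsh x * zeta 2.

Lemma hyp1 x : 0 <= x -> P1 (x + 1) - (P1 x - x * (Hsh (x + 1) / (1 * (x + 1)))) + (fun _ => 0) (x + 1) = bH (x + 1).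
Proof.
  intro Hx. unfold P1, bH.
  assert (E1 : Hsh x = Hsh (x + 1) - / (x + 1)) by (rewrite H_rec by lra; ring).
  assert (E2 : Hshm 2 x = Hshm 2 (x + 1) - / (x + 1) ^ 2) by (rewrite Hm_rec by (lia || lra); ring).
  rewrite E1, E2. field. lra.
Qed.

Lemma hyp2 x : 0 <= x -> P2 (x + 1) - (P2 x - x * (Hshm 2 (x + 1) / (1 * (x + 1)))) + (fun y => - (Hsh y / y ^ 2)) (x + 1) = bH2 (x + 1).
Proof.
  intro Hx. unfold P2, bH2.
  assert (E1 : Hsh x = Hsh (x + 1) - / (x + 1)) by (rewrite H_rec by lra; ring).
  assert (E2 : Hshm 2 x = Hshm 2 (x + 1) - / (x + 1) ^ 2) by (rewrite Hm_rec by (lia || lra); ring).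
  assert (E3 : Hshm 3 x = Hshm 3 (x + 1) - / (x + 1) ^ 3) by (rewrite Hm_rec by (lia || lra); ring).
  rewrite E1, E2, E3. field. lra.
Qed.

Lemma hyp3 x : 0 <= x -> P3 (x + 1) - (P3 x - x * ((fun t => Hsh t ^ 2) (x + 1) / (1 * (x + 1)))) + (fun y => Hsh y / y ^ 2) (x + 1) = bHH (x + 1).
Proof.
  intro Hx. unfold P3, bHH. cbv beta.
  assert (E1 : Hsh x = Hsh (x + 1) - / (x + 1)) by (rewrite H_rec by lra; ring).
  assert (E2 : Hshm 2 x = Hshm 2 (x + 1) - / (x + 1) ^ 2) by (rewrite Hm_rec by (lia || lra); ring).
  rewrite E1, E2. field. lra.
Qed.

Lemma inf_val f l1 l2 : infinite_sum f l1 -> l1 = l2 -> infinite_sum f l2.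
Proof. intros H E; subst; auto. Qed.

Theorem mainTheorem17 (k r : nat) (alpha : R)
  (hk : (2 <= k)%nat) (ha : alpha > INR (k + r)) :
  let A := alpha - INR r - 1 in
  infinite_sum (fun n => Hsh (INR (n + 1) + alpha) / C (n + 1 + k + r) k)
    (INR k * sum1 (k - 1) (fun j => (-1) ^ (j + 1) * C (k - 1) j *
      ( Hsh A ^ 2 + Hshm 2 A - Hsh (A - INR j) ^ 2 - Hshm 2 (A - INR j)
        - (INR (r + 1 + j) - alpha) *
            sum1 (r + 1 + j) (fun i => Hsh (A + INR i - INR j) / (INR i * (A + INR i - INR j)))
        + (INR (r + 1) - alpha) *
            sum1 (r + 1) (fun i => Hsh (A + INR i) / (INR i * (A + INR i))) ))) /\
  infinite_sum (fun n => Hshm 2 (INR (n + 1) + alpha) / C (n + 1 + k + r) k)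
    (INR k * sum1 (k - 1) (fun j => (-1) ^ (j + 1) * C (k - 1) j *
      ( (INR (r + 1) - alpha) *
            sum1 (r + 1) (fun i => Hshm 2 (A + INR i) / (INR i * (A + INR i)))
        - (INR (r + 1 + j) - alpha) *
            sum1 (r + 1 + j) (fun i => Hshm 2 (A + INR i - INR j) / (INR i * (A + INR i - INR j)))
        - sum1 j (fun i => Hsh (A + INR i - INR j) / (A + INR i - INR j) ^ 2)
        + 2 * Hshm 3 A + Hsh (A - INR j) * zeta 2 + 2 * Hsh A * Hshm 2 A
        - 2 * Hshm 3 (A - INR j) - Hsh A * zeta 2
        - 2 * Hsh (A - INR j) * Hshm 2 (A - INR j) ))) /\
  infinite_sum (fun n => Hsh (INR (n + 1) + alpha) ^ 2 / C (n + 1 + k + r) k)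
    (INR k * sum1 (k - 1) (fun j => (-1) ^ (j + 1) * C (k - 1) j *
      ( Hsh A ^ 3 + Hsh A * Hshm 2 A + Hsh A * zeta 2
        - Hsh (A - INR j) ^ 3 - Hsh (A - INR j) * Hshm 2 (A - INR j)
        - Hsh (A - INR j) * zeta 2
        + (INR (r + 1) - alpha) *
            sum1 (r + 1) (fun i => Hsh (A + INR i) ^ 2 / (INR i * (A + INR i)))
        + sum1 j (fun i => Hsh (A + INR i - INR j) / (A + INR i - INR j) ^ 2)
        - (INR (r + 1 + j) - alpha) *
            sum1 (r + 1 + j) (fun i => Hsh (A + INR i - INR j) ^ 2 / (INR i * (A + INR i - INR j))) ))).
Proof.
  intro A.
  assert (HA : forall j, (j <= k - 1)%nat -> INR j <= A).
  { intros j Hj. unfold A. apply le_INR in Hj. rewrite minus_INR in Hj by lia.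
    rewrite plus_INR in ha. simpl in Hj. lra. }
  assert (C1 : forall j, INR (r + 1 + j) - alpha = - (A - INR j)).
  { intro j. unfold A. rewrite !plus_INR. simpl. ring. }
  assert (C2 : INR (r + 1) - alpha = - A).
  { unfold A. rewrite !plus_INR. simpl. ring. }
  assert (R1 : forall (f : R -> R) j M, sum1 M (fun i => f (A + INR i - INR j)) = sum1 M (fun i => f ((A - INR j) + INR i))).
  { intros f j M. apply sum1_ext. intros; f_equal; ring. }
  split; [|split].
  - eapply inf_val. apply (main_gen Hsh bH k r alpha hk ha (fun y Hy => baseH y Hy)).
    f_equal. apply sum1_ext. intros j Hj. f_equal.
    change (alpha - INR r - 1) with A.
    rewrite (tele_j Hsh P1 bH (fun _ => 0) A r hyp1 j (HA j ltac:(lia))).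
    rewrite sumlt_zero. unfold Gen, P1. rewrite C1, C2.
    rewrite (sum1_ext (r+1+j) (fun i => Hsh (A + INR i - INR j) / (INR i * (A + INR i - INR j)))
       (fun i => Hsh ((A - INR j) + INR i) / (INR i * ((A - INR j) + INR i))))
       by (intros; replace (A + INR i - INR j) with (A - INR j + INR i) by ring; reflexivity).
    ring.
  - eapply inf_val. apply (main_gen (Hshm 2) bH2 k r alpha hk ha (fun y Hy => baseH2 y Hy)).
    f_equal. apply sum1_ext. intros j Hj. f_equal.
    change (alpha - INR r - 1) with A.
    rewrite (tele_j (Hshm 2) P2 bH2 (fun y => - (Hsh y / y ^ 2)) A r hyp2 j (HA j ltac:(lia))).
    cbv beta. rewrite sumlt_opp. unfold Gen, P2. rewrite C1, C2.
    pose proof (reidx (fun t => Hsh t / t ^ 2) j A) as RR. cbv beta in RR. rewrite RR.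
    rewrite (sum1_ext (r+1+j) (fun i => Hshm 2 (A + INR i - INR j) / (INR i * (A + INR i - INR j)))
       (fun i => Hshm 2 ((A - INR j) + INR i) / (INR i * ((A - INR j) + INR i))))
       by (intros; replace (A + INR i - INR j) with (A - INR j + INR i) by ring; reflexivity).
    ring.
  - eapply inf_val. apply (main_gen (fun t => Hsh t ^ 2) bHH k r alpha hk ha (fun y Hy => baseHH y Hy)).
    f_equal. apply sum1_ext. intros j Hj. f_equal.
    change (alpha - INR r - 1) with A.
    rewrite (tele_j (fun t => Hsh t ^ 2) P3 bHH (fun y => Hsh y / y ^ 2) A r hyp3 j (HA j ltac:(lia))).
    cbv beta. unfold Gen, P3. rewrite C1, C2.
    pose proof (reidx (fun t => Hsh t / t ^ 2) j A) as RR. cbv beta in RR. rewrite RR.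
    rewrite (sum1_ext (r+1+j) (fun i => Hsh (A + INR i - INR j) ^ 2 / (INR i * (A + INR i - INR j)))
       (fun i => Hsh ((A - INR j) + INR i) ^ 2 / (INR i * ((A - INR j) + INR i))))
       by (intros; replace (A + INR i - INR j) with (A - INR j + INR i) by ring; reflexivity).
    ring.
Qed.
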